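(* Let $p$ be a prime and $r,s$ integers with $1\le s\le p-1$. Every proper $(r,s)$-GAP in $\mathbb{F}_p^n$ can be written as a union of independent $(k,s)$-GAPs in $\mathbb{F}_p^n$ for some integer $k\ge r\log s/\log p$.
   Context: For $a_1,\dots,a_r,b\in\mathbb{F}_p^n$, the $(r,s)$-GAP $G_{a_1,\dots,a_r,b}$ is $\{\sum_{i=1}^r a_it_i+b: t_i\in\mathbb{Z},\ 0\le t_i\le s-1\}$; it is proper if all $s^r$ sums are distinct, and independent if $a_1,\dots,a_r$ are linearly independent over $\mathbb{F}_p$. *)

(* Defs.v *)
From Stdlib Require Import Reals.
From HB Require Import structures.
From mathcomp Require Import all_boot all_order all_algebra.
Set Implicit Arguments. Unset Strict Implicit. Unset Printing Implicit Defensive.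
Import GRing.Theory.
Local Open Scope ring_scope.

(* The coefficient vector t = (t_1,...,t_r) with 0 <= t_i <= s-1 is a
   finite function 'I_r -> 'I_s; t_i acts on a_i as the integer multiple. *)
Definition gap_elt (p n r s : nat) (a : 'I_r -> 'rV['F_p]_n) (b : 'rV['F_p]_n)
  (t : {ffun 'I_r -> 'I_s}) : 'rV['F_p]_n :=
  \sum_(i < r) a i *+ t i + b.

Definition GAP (p n r : nat) (s : nat) (a : 'I_r -> 'rV['F_p]_n) (b : 'rV['F_p]_n)
  : {set 'rV['F_p]_n} :=
  [set @gap_elt p n r s a b t | t : {ffun 'I_r -> 'I_s}].

Definition proper_GAP (p n r s : nat) (a : 'I_r -> 'rV['F_p]_n) (b : 'rV['F_p]_n) : Prop :=
  injective (@gap_elt p n r s a b).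

Definition lin_indep (p n r : nat) (a : 'I_r -> 'rV['F_p]_n) : Prop :=
  forall c : 'I_r -> 'F_p, \sum_(i < r) c i *: a i = 0 -> forall i, c i = 0.
Arguments GAP {p n r} s a b.
Arguments proper_GAP {p n r} s a b.

(* Main.v *)
Require Import Defs.
From Stdlib Require Import Reals.
From HB Require Import structures.
From mathcomp Require Import all_boot all_order all_algebra.
From Stdlib Require Import Lra.
Import GRing.Theory.

Section Aux.
Local Open Scope ring_scope.
Variables (p n r s k : nat) (a : 'I_r -> 'rV['F_p]_n) (b : 'rV['F_p]_n) (f : 'I_k -> 'I_r).
Hypothesis finj : injective f.

Definition Sf := [set f j | j in 'I_k].

Lemma gap_split (t : {ffun 'I_r -> 'I_s}) :
  gap_elt a b t = \sum_j a (f j) *+ t (f j) + (b + \sum_(i | i \notin Sf) a i *+ t i).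
Proof.
rewrite /gap_elt (bigID (fun i => i \in Sf)) /=.
rewrite /Sf big_imset /=; last by move=> x y _ _; apply: finj.
by rewrite -addrA [b + _]addrC.
Qed.

Lemma span_lemma (X : 'M['F_p]_(k, n)) (hX : forall j, row j X = a (f j))
  (hM : ((\matrix_(i < r) a i) <= X)%MS) (t : {ffun 'I_r -> 'I_s}) :
  exists c : 'I_k -> 'F_p, \sum_i a i *+ t i = \sum_j c j *: a (f j).
Proof.
case/submxP: hM => D hD.
pose u : 'rV['F_p]_r := \row_i (t i : nat)%:R.
exists (fun j => (u *m D) 0 j).
have -> : \sum_i a i *+ t i = u *m (\matrix_(i < r) a i).
  rewrite mulmx_sum_row; apply: eq_bigr => i _.
  by rewrite mxE rowK scaler_nat.
rewrite hD mulmxA mulmx_sum_row; apply: eq_bigr => j _.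
by rewrite hX.
Qed.
End Aux.

Lemma INR_expn m e : INR (m ^ e) = pow (INR m) e.
Proof. elim: e => [|e IH] //=. by rewrite expnS mult_INR IH. Qed.

Lemma real_bound (p r s k : nat) : (2 <= p)%N -> (1 <= s)%N -> (s ^ r <= p ^ k)%N ->
  Rge (INR k) (Rdiv (Rmult (INR r) (ln (INR s))) (ln (INR p))).
Proof.
move=> hp hs hle.
have Hs : Rlt 0 (INR s) by apply: lt_0_INR; apply/ltP.
have Hp : Rlt 1 (INR p) by apply: lt_1_INR; apply/ltP.
have Hlp : Rlt 0 (ln (INR p)) by rewrite -ln_1; apply: ln_increasing; lra.
have H1 : Rle (INR (s ^ r)) (INR (p ^ k)) by apply: le_INR; apply/leP.
rewrite !INR_expn in H1.
have H2 : Rle (ln (pow (INR s) r)) (ln (pow (INR p) k)).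
  case: (Rle_lt_or_eq_dec _ _ H1) => h.
    by apply: Rlt_le; apply: ln_increasing => //; apply: pow_lt.
  by rewrite h; apply: Rle_refl.
rewrite !ln_pow in H2; try lra.
apply: Rle_ge.
apply: (Rmult_le_reg_r (ln (INR p))) => //.
rewrite /Rdiv Rmult_assoc Rinv_l; lra.
Qed.

Theorem claim5p7 (p r s : nat) (hp : prime p) (hs1 : (1 <= s)%N) (hs2 : (s <= p - 1)%N)
  (n : nat) (a : 'I_r -> 'rV['F_p]_n) (b : 'rV['F_p]_n) :
  proper_GAP s a b ->
  exists k : nat,
    Rge (INR k) (Rdiv (Rmult (INR r) (ln (INR s))) (ln (INR p))) /\
    exists (m : nat) (A : 'I_m -> 'I_k -> 'rV['F_p]_n) (B : 'I_m -> 'rV['F_p]_n),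
      (forall j, lin_indep (A j)) /\
      GAP s a b = \bigcup_(j < m) GAP s (A j) (B j).
Proof.
move=> hprop.
pose M : 'M['F_p]_(r, n) := (\matrix_(i < r) a i)%R.
pose f := maxrankfun M.
have finj : injective f := @maxrankfun_inj _ _ _ M.
pose X := rowsub f M.
have hX : forall j, row j X = a (f j) by move=> j; rewrite row_rowsub rowK.
have hM : (M <= X)%MS by rewrite /X eq_maxrowsub.
exists (\rank M); split.
  apply: real_bound => //; first exact: prime_gt1.
  have -> : (s ^ r)%N = #|GAP s a b|.
    by rewrite card_imset // card_ffun !card_ord.
  have <- : #|{ffun 'I_(\rank M) -> 'F_p}| = (p ^ \rank M)%N.
    by rewrite card_ffun (card_Fp hp) card_ord.
  rewrite -cardsT.
  apply: (leq_trans _ (leq_imset_card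
     (fun c : {ffun 'I_(\rank M) -> 'F_p} => (\sum_j c j *: a (f j) + b)%R) [set: _])).
  apply: subset_leq_card; apply/subsetP => x /imsetP [t _ ->].
  have [c hc] := @span_lemma _ _ _ _ _ a f X hX hM t.
  apply/imsetP; exists [ffun j => c j] => //.
  by rewrite /gap_elt hc; congr (_ + _)%R; apply: eq_bigr => j _; rewrite ffunE.
pose T := {ffun 'I_r -> 'I_s}.
pose B := fun j : 'I_#|T| =>
  (b + \sum_(i | i \notin @Sf _ _ f) a i *+ (enum_val j) i)%R.
exists #|T|, (fun _ j => a (f j)), B; split.
  move=> _ c hc j.
  have h0 : ((\row_l c l) *m X = 0 *m X)%R.
    rewrite mul0mx mulmx_sum_row -[RHS]hc; apply: eq_bigr => l _; by rewrite mxE hX.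
  move/(row_free_inj (maxrowsub_free M)): h0 => /matrixP /(_ ord0 j).
  by rewrite !mxE.
apply/setP => x; apply/imsetP/bigcupP.
  case=> t _ ->.
  exists (enum_rank t) => //.
  apply/imsetP; exists [ffun j => t (f j)] => //.
  rewrite (@gap_split _ _ _ _ _ a b f finj) /gap_elt /B enum_rankK; congr (_ + _)%R.
  by apply: eq_bigr => j _; rewrite ffunE.
case=> j _ /imsetP [u _ ->].
pose t' : T := [ffun i => if [pick l | f l == i] is Some l then u l else enum_val j i].
exists t' => //.
rewrite (@gap_split _ _ _ _ _ a b f finj) /gap_elt /B; congr (_ + _)%R.
  apply: eq_bigr => l _; rewrite ffunE.
  case: pickP => [l' /eqP /finj -> // | /(_ l)]; by rewrite eqxx.
congr (_ + _)%R; apply: eq_bigr => i hi; rewrite ffunE.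
case: pickP => [l' /eqP hl | //].
by exfalso; move/negP: hi; apply; rewrite -hl; apply: imset_f.
Qed.
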